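(* Let $f:2^V\to\mathbb{Z}_{\ge0}$ be a connectivity function, $W\subseteq V$, and $(C_1,C_2,C_3)$ a minimum $W$-improvement. Then for every set $W'$ such that $W'\subseteq W$ or $W'\subseteq V\setminus W$, and every $i\in\{1,2,3\}$, it holds that $f(W'\cap C_i)\le f(W')$.
   Context: A connectivity function $f:2^V\to\mathbb{Z}_{\ge0}$ ($V$ finite) satisfies $f(\emptyset)=0$, $f(X)=f(V\setminus X)$, and $f(X\cup Y)+f(X\cap Y)\le f(X)+f(Y)$. For $W\subseteq V$, a $W$-improvement is a tripartition $(C_1,C_2,C_3)$ of $V$ (pairwise disjoint, possibly empty, union $V$) with $f(C_i)<f(W)/2$, $f(C_i\cap W)<f(W)$, $f(C_i\cap(V\setminus W))<f(W)$ for each $i$. Its width is $\max_i f(C_i)$, its sum-width is $\sum_i f(C_i)$, and its arity is the number of nonempty $C_i$. A $W$-improvement is minimum if it has minimum width among all $W$-improvements, subject to that minimum arity, and subject to those minimum sum-width. *)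

(* Defs.v *)
From mathcomp Require Import all_boot.
Set Implicit Arguments. Unset Strict Implicit. Unset Printing Implicit Defensive.

Definition connectivity (V : finType) (f : {set V} -> nat) : Prop :=
  [/\ f set0 = 0,
      forall X, f X = f (~: X)
    & forall X Y, f (X :|: Y) + f (X :&: Y) <= f X + f Y].

Definition tripartition (V : finType) (C : 'I_3 -> {set V}) : Prop :=
  (forall i j, i != j -> [disjoint C i & C j]) /\
  (forall x : V, exists i, x \in C i).

(* f(C_i) < f(W)/2 is encoded as 2 * f(C_i) < f(W) (exact over integers) *)
Definition improvement (V : finType) (f : {set V} -> nat) (W : {set V})
  (C : 'I_3 -> {set V}) : Prop :=
  tripartition C /\
  forall i, [/\ 2 * f (C i) < f W, f (C i :&: W) < f W
              & f (C i :&: ~: W) < f W].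

Definition width (V : finType) (f : {set V} -> nat) (C : 'I_3 -> {set V}) :=
  \max_(i < 3) f (C i).
Definition sumwidth (V : finType) (f : {set V} -> nat) (C : 'I_3 -> {set V}) :=
  \sum_(i < 3) f (C i).
Definition arity (V : finType) (C : 'I_3 -> {set V}) :=
  #|[set i : 'I_3 | C i != set0]|.

Definition min_improvement (V : finType) (f : {set V} -> nat) (W : {set V})
  (C : 'I_3 -> {set V}) : Prop :=
  improvement f W C /\
  forall D, improvement f W D ->
    width f C < width f D \/
    (width f C = width f D /\
      (arity C < arity D \/
       (arity C = arity D /\ sumwidth f C <= sumwidth f D))).

(* Main.v *)
Require Import Defs.
From mathcomp Require Import all_boot.
From mathcomp Require Import zify.

Lemma core (V : finType) (f : {set V} -> nat) (W : {set V}) (m : nat)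
  (C : 'I_3 -> {set V}) (i : 'I_3) (W' : {set V}) :
  connectivity f -> tripartition C ->
  (forall k, [/\ 2 * f (C k) < m, f (C k :&: W) < m & f (C k :&: ~: W) < m]) ->
  W' \subset W -> f W' < f (W' :&: C i) ->
  exists D, [/\ tripartition D,
   (forall k, [/\ 2 * f (D k) < m, f (D k :&: W) < m & f (D k :&: ~: W) < m]),
   width f D <= width f C, arity D <= arity C & sumwidth f D < sumwidth f C].
Proof.
case=> f0 fC fS [disjC covC] HC sW' Hlt.
pose P := fun Y : {set V} => (C i \subset Y) && (Y \subset C i :|: W').
have P0 : P (C i) by rewrite /P subxx subsetUl.
case: (arg_minnP f P0) => Y /andP[sCY sYU] Ymin.
have PU : P (C i :|: W') by rewrite /P subxx subsetUl.
have hU : f (C i :|: W') < f (C i).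
  have := fS (C i) W'; rewrite setIC; lia.
have hY : f Y < f (C i) := leq_ltn_trans (Ymin _ PU) hU.
have G : forall S : {set V}, [disjoint S & C i] -> f (S :&: ~: Y) <= f S.
  move=> S dS; have := fS S (~: Y).
  have e : S :|: ~: Y = ~: (Y :&: ~: S) by rewrite setCI setCK setUC.
  have PY : P (Y :&: ~: S).
    rewrite /P subsetI sCY /= (subset_trans (subsetIl _ _) sYU) ?andbT.
    by rewrite subsets_disjoint setCK disjoint_sym.
  have := Ymin _ PY; rewrite e -(fC Y) -(fC (Y :&: ~: S)); lia.
have eYn : Y :&: ~: W = C i :&: ~: W.
  apply/eqP; rewrite eqEsubset (setSI _ sCY) andbT.
  apply/subsetP => x; rewrite !inE => /andP[xY xW].
  move: (subsetP sYU x xY); rewrite inE => /orP[-> //|xW'].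
  by rewrite (subsetP sW' x xW') in xW.
have eI : Y :&: (C i :&: W :|: W') = Y :&: W.
  apply/setP=> x; rewrite !inE; case xY: (x \in Y) => //=.
  move: (subsetP sYU x xY) (subsetP sW' x); rewrite !inE.
  by case: (x \in C i); case: (x \in W'); case: (x \in W) => //= _ /(_ isT).
have eU : Y :|: (C i :&: W :|: W') = C i :|: W'.
  apply/setP=> x; rewrite !inE; case xY: (x \in Y) => /=.
    by move: (subsetP sYU x xY); rewrite inE.
  case xC: (x \in C i) => //=; by rewrite (subsetP sCY x xC) in xY.
have eA : (C i :&: W) :&: W' = W' :&: C i.
  apply/setP=> x; rewrite !inE; move: (subsetP sW' x).
  by case: (x \in C i); case: (x \in W'); case: (x \in W) => //= /(_ isT).
have hYW : f (Y :&: W) < f (C i :&: W).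
  have := fS Y (C i :&: W :|: W'); rewrite eI eU.
  have := fS (C i :&: W) W'; rewrite eA.
  have := Ymin _ PU; lia.
have Cn0 : C i != set0.
  by apply/eqP => e; rewrite e setI0 f0 in Hlt.
pose D := fun k : 'I_3 => if k == i then Y else C k :&: ~: Y.
have hDi : D i = Y by rewrite /D eqxx.
have hDk : forall k, f (D k) <= f (C k).
  move=> k; rewrite /D; case: eqVneq => [->|ki]; first by apply: ltnW.
  exact: G (disjC k i ki).
exists D; split.
- split.
  + move=> j k jk; rewrite /D.
    case: (eqVneq j i) => [ji|ji]; case: (eqVneq k i) => [ki|ki].
    * by rewrite ji ki eqxx in jk.
    * by rewrite -setI_eq0 setICA setICr setI0.
    * by rewrite -setI_eq0 -setIA (setIC (~: Y)) setICr setI0.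
    * have := disjC j k jk; rewrite -!setI_eq0 => /eqP H.
      by rewrite setIACA H set0I.
  + move=> x; case xY: (x \in Y); first by exists i; rewrite hDi.
    have [k xk] := covC x; exists k; rewrite /D.
    case: eqVneq => [ki|ki].
      by subst k; rewrite (subsetP sCY x xk) in xY.
    by rewrite inE xk inE xY.
- move=> k; rewrite /D; case: (eqVneq k i) => [_|ki].
    have [h1 h2 h3] := HC i; split; try lia.
    by rewrite eYn.
  have [h1 h2 h3] := HC k; have dk := disjC k i ki.
  have e1 : forall Z, C k :&: ~: Y :&: Z = (C k :&: Z) :&: ~: Y.
    by move=> Z; rewrite -!setIA (setIC (~: Y)).
  split; rewrite ?e1.
  + have := G _ dk; lia.
  + have := G (C k :&: W) (disjointWl (subsetIl _ _) dk); lia.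
  + have := G (C k :&: ~: W) (disjointWl (subsetIl _ _) dk); lia.
- rewrite /width; apply/bigmax_leqP => k _.
  exact: leq_trans (hDk k) (leq_bigmax k).
- rewrite /arity; apply: subset_leq_card; apply/subsetP => k; rewrite !inE /D.
  case: (eqVneq k i) => [e|_] hk; first by subst k.
  apply/eqP => e; move: hk; by rewrite e set0I eqxx.
- rewrite /sumwidth (bigD1 i) //= (bigD1 i (P := predT)) //= hDi.
  have hs : \sum_(k < 3 | k != i) f (D k) <= \sum_(k < 3 | k != i) f (C k).
    by apply: leq_sum => k _; exact: hDk.
  by rewrite -addSn; apply: leq_add hY hs.
Qed.

Theorem lemma2 (V : finType) (f : {set V} -> nat) (W : {set V})
  (C : 'I_3 -> {set V}) :
  connectivity f -> min_improvement f W C ->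
  forall W' : {set V}, (W' \subset W \/ W' \subset ~: W) ->
  forall i : 'I_3, f (W' :&: C i) <= f W'.
Proof.
move=> hf [[tC HC] Hmin] W' hW' i.
rewrite leqNgt; apply/negP => Hlt.
have fin : forall D, width f C < width f D \/
    (width f C = width f D /\
      (arity C < arity D \/
       (arity C = arity D /\ sumwidth f C <= sumwidth f D))) ->
    width f D <= width f C -> arity D <= arity C -> sumwidth f D < sumwidth f C -> False.
  move=> D; lia.
case: hW' => sW'.
- have [D [tD HD h1 h2 h3]] := core _ _ _ _ _ _ _ hf tC HC sW' Hlt.
  exact: fin D (Hmin D (conj tD HD)) h1 h2 h3.
- have HC' : forall k, [/\ 2 * f (C k) < f W, f (C k :&: ~: W) < f W
      & f (C k :&: ~: ~: W) < f W].
    by move=> k; have [a b c] := HC k; rewrite setCK.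
  have [D [tD HD h1 h2 h3]] := core _ _ _ _ _ _ _ hf tC HC' sW' Hlt.
  have HD' : improvement f W D.
    split => // k; have [a b c] := HD k; move: c; rewrite setCK; by split.
  exact: fin D (Hmin D HD') h1 h2 h3.
Qed.
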